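(* Let $n\geq4$, $D_n=\{x\in\mathbb{Z}^n:\sum_i x_i\equiv0\bmod2\}$, $\mathcal{P}$ its Voronoi region with vertex set $V_{\mathcal{P}}$, and $D_n^\#$ the dual lattice. Let $\tilde G$ be the Cayley graph on $\frac12D_n^\#$ with generating set $\frac12V_{\mathcal{P}}$. Then every clique $C$ of $\tilde G$ satisfies $\delta^0(C)=\frac{|C|}{|N[C]|}\leq\frac{1}{(3/4)2^n+n-1}$.
   Context: The Voronoi region of a lattice $\Lambda\subset\mathbb{R}^n$ is $\{z:\langle z-x,z-x\rangle\geq\langle z,z\rangle\ \forall x\in\Lambda\}$; $D_n^\#=\{y:\langle x,y\rangle\in\mathbb{Z}\ \forall x\in D_n\}$. It is known that $V_{\mathcal{P}}$ consists of the $2n$ vectors $\pm e_i$ and the $2^n$ vectors $(\pm\frac12,\dots,\pm\frac12)$. In the Cayley graph, $x,y$ are adjacent iff $x-y\in\frac12V_{\mathcal{P}}$. A clique is a set of vertices any two distinct elements of which are adjacent; $N[C]=C+(\{0\}\cup\frac12V_{\mathcal{P}})$ is its closed neighborhood. *)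

(* Defs.v *)
From HB Require Import structures.
From mathcomp Require Import all_boot all_order all_algebra.
From mathcomp Require Import finmap.
Set Implicit Arguments. Unset Strict Implicit. Unset Printing Implicit Defensive.
Import Order.TTheory GRing.Theory Num.Theory.
Local Open Scope ring_scope.

Definition dotp (n : nat) (x y : 'rV[rat]_n) : rat := \sum_(i < n) x 0 i * y 0 i.

Definition intvec (n : nat) (x : 'rV[rat]_n) : Prop := forall i, x 0 i \is a Num.int.

Definition Dn (n : nat) (x : 'rV[rat]_n) : Prop :=
  intvec x /\ (\sum_(i < n) x 0 i) / 2 \is a Num.int.

Definition Dn_dual (n : nat) (y : 'rV[rat]_n) : Prop :=
  forall x, Dn x -> dotp x y \is a Num.int.

Definition voronoi_Dn (n : nat) (z : 'rV[rat]_n) : Prop :=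
  forall x, Dn x -> dotp (z - x) (z - x) >= dotp z z.

(* V_P: the 2n vectors +-e_i and the 2^n vectors (+-1/2,...,+-1/2)
   (the known vertex set of the Voronoi region of D_n). *)
Definition VP (n : nat) : seq 'rV[rat]_n :=
  [seq delta_mx 0 i | i <- enum 'I_n] ++ [seq - delta_mx 0 i | i <- enum 'I_n] ++
  [seq \row_(i < n) (if s i then 1 / 2 else - (1 / 2)) | s : {ffun 'I_n -> bool} <- enum {ffun 'I_n -> bool}].

Definition vertex (n : nat) (v : 'rV[rat]_n) : Prop := Dn_dual (2 *: v).

Definition halfVP (n : nat) : seq 'rV[rat]_n := [seq (1 / 2) *: v | v <- VP n].

Definition adjacent (n : nat) (x y : 'rV[rat]_n) : Prop := x - y \in halfVP n.

Local Open Scope fset_scope.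

Definition clique (n : nat) (C : {fset 'rV[rat]_n}) : Prop :=
  (forall x, x \in C -> vertex x) /\
  (forall x y, x \in C -> y \in C -> x != y -> adjacent x y).

Definition closed_nbhd (n : nat) (C : {fset 'rV[rat]_n}) : {fset 'rV[rat]_n} :=
  [fset (c + v)%R | c in C, v in ((0 : 'rV[rat]_n) :: halfVP n)].

Definition delta0 (n : nat) (C : {fset 'rV[rat]_n}) : rat :=
  (#|` C|)%:R / (#|` closed_nbhd C|)%:R.

(* Main.v *)
Require Import Defs.
From mathcomp Require Import all_boot all_order all_algebra.
From mathcomp Require Import finmap.
From mathcomp Require Import zify ring lra.
Import Order.TTheory GRing.Theory Num.Theory.
Local Open Scope ring_scope.

Definition ax {n} (i : 'I_n) (b : bool) : 'rV[rat]_n :=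
  \row_j (if j == i then (if b then 1/2 else -(1/2)) else 0).
Definition qv {n} (s : {ffun 'I_n -> bool}) : 'rV[rat]_n :=
  \row_j (if s j then 1/4 else -(1/4)).

Ltac dsimp := rewrite ?eqxx /=; case: eqP => _ /=; rewrite ?mulr1 ?mulr0 ?mulrN1 ?mulrN ?oppr0; lra.
Lemma halfVP_P n (v : 'rV[rat]_n) :
  v \in halfVP n <-> (exists i b, v = ax i b) \/ (exists s, v = qv s).
Proof.
split.
- rewrite /halfVP /VP => /mapP [w]; rewrite !mem_cat => /orP [|/orP []] /mapP [x _ ->] ->.
  + left; exists x, true; apply/rowP => j; rewrite !mxE; dsimp.
  + left; exists x, false; apply/rowP => j; rewrite !mxE; dsimp.
  + right; exists x; apply/rowP => j; rewrite !mxE; case: (x j); lra.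
- case => [[i [b ->]]|[s ->]]; rewrite /halfVP /VP; apply/mapP.
  + case: b.
    * exists (delta_mx 0 i); first by rewrite mem_cat; apply/orP; left; apply/mapP; exists i => //; rewrite mem_enum.
      apply/rowP => j; rewrite !mxE; dsimp.
    * exists (- delta_mx 0 i); first by rewrite !mem_cat; apply/orP; right; apply/orP; left; apply/mapP; exists i => //; rewrite mem_enum.
      apply/rowP => j; rewrite !mxE; dsimp.
  + exists (\row_(i < n) (if s i then 1 / 2 else - (1 / 2))).
    by rewrite !mem_cat; apply/orP; right; apply/orP; right; apply/mapP; exists s => //; rewrite mem_enum.
    apply/rowP => j; rewrite !mxE; case: (s j); lra.
Qed.

Lemma ordS_neq {n} (k : 'I_n) : (1 < n)%N -> ordS k != k.
Proof.
move=> h; apply/eqP => /(congr1 val) /=; case: k => k hk /=.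
case: (ltnP k.+1 n) => h2.
- by rewrite modn_small // => /eqP; rewrite -[k.+1]addn1 -{2}[k]addn0 eqn_add2l.
- have -> : k.+1 = n by apply/eqP; rewrite eqn_leq hk h2.
  by rewrite modnn => k0; move: h2 hk; rewrite -k0; lia.
Qed.

Lemma ex_other {n} (i k : 'I_n) : (3 <= n)%N -> exists j : 'I_n, (j != i) && (j != k).
Proof.
move=> h.
have h0 : (0 < n)%N by lia. have h1 : (1 < n)%N by lia. have h2 : (2 < n)%N by lia.
case: (boolP ((Ordinal h0 != i) && (Ordinal h0 != k))) => [H|H]; first by exists (Ordinal h0).
case: (boolP ((Ordinal h1 != i) && (Ordinal h1 != k))) => [H'|H']; first by exists (Ordinal h1).
case: (boolP ((Ordinal h2 != i) && (Ordinal h2 != k))) => [H''|H'']; first by exists (Ordinal h2).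
exfalso; move: H H' H''; rewrite !negb_and !negbK.
by case/orP => /eqP e0; case/orP => /eqP e1; case/orP => /eqP e2; move: (congr1 val e0) (congr1 val e1) (congr1 val e2) => /=; lia.
Qed.

Lemma coordE {n} (u w : 'rV[rat]_n) (j : 'I_n) : u = w -> u 0 j = w 0 j.
Proof. by move=> ->. Qed.

Lemma L1a {n} {i b k e} {s : {ffun 'I_n -> bool}} : (3 <= n)%N -> ax i b - ax k e <> qv s.
Proof.
move=> h /(coordE) H; have [j /andP [ji jk]] := ex_other i k h.
move: (H j); rewrite !mxE (negbTE ji) (negbTE jk); case: (s j); lra.
Qed.

Lemma L1b {n} {i b k e l t} : (3 <= n)%N -> ax i b - ax k e <> ax l t :> 'rV[rat]_n.
Proof.
move=> h /(coordE) H.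
case: (eqVneq i k) => [eik|nik].
- subst k; case: (eqVneq l i) => [eli|nli].
  + subst l; move: (H i); rewrite !mxE eqxx; case: (b); case: (e); case: (t); lra.
  + move: (H l); rewrite !mxE eqxx (negbTE nli); case: (t); lra.
- case: (eqVneq l i) => [eli|nli].
  + subst l; move: (H k); rewrite !mxE eqxx eq_sym (negbTE nik); case: (e); lra.
  + move: (H i); rewrite !mxE eqxx (negbTE nik) eq_sym (negbTE nli); case: (b); lra.
Qed.

Lemma L2 {n} {s t u : {ffun 'I_n -> bool}} : (0 < n)%N -> qv s - qv t <> qv u.
Proof.
move=> h /(coordE) H; move: (H (Ordinal h)); rewrite !mxE.
by case: (s _); case: (t _); case: (u _); lra.
Qed.

Lemma L2b {n} {s t : {ffun 'I_n -> bool}} {k tau} : qv s - qv t = ax k tau ->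
  [/\ (forall j, j != k -> s j = t j), s k = tau & t k = ~~ tau].
Proof.
move=> /(coordE) H; split.
- move=> j jk; move: (H j); rewrite !mxE (negbTE jk).
  by case: (s j); case: (t j); lra.
- move: (H k); rewrite !mxE eqxx; by case: (s k); case: (t k); case: (tau); lra.
- move: (H k); rewrite !mxE eqxx; by case: (s k); case: (t k); case: (tau); lra.
Qed.

Lemma L3a {n} {i e} {s : {ffun 'I_n -> bool}} {k tau} : (3 <= n)%N -> ax i e - qv s <> ax k tau.
Proof.
move=> h /(coordE) H; have [j /andP [ji jk]] := ex_other i k h.
move: (H j); rewrite !mxE (negbTE ji) (negbTE jk); case: (s j); lra.
Qed.

Lemma L3b {n} {i e} {s t : {ffun 'I_n -> bool}} : ax i e - qv s = qv t -> t i = e.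
Proof.
move=> /(coordE) H; move: (H i); rewrite !mxE eqxx.
by case: (s i); case: (t i); case: (e); lra.
Qed.

Lemma ax_qv {n} {i b} {s : {ffun 'I_n -> bool}} : (3 <= n)%N -> ax i b <> qv s.
Proof.
move=> h /(coordE) H; have [j /andP [ji _]] := ex_other i i h.
move: (H j); rewrite !mxE (negbTE ji); case: (s j); lra.
Qed.

Lemma qv_inj {n} {s t : {ffun 'I_n -> bool}} : qv s = qv t -> s = t.
Proof.
move=> /(coordE) H; apply/ffunP => j; move: (H j); rewrite !mxE.
by case: (s j); case: (t j); lra.
Qed.

Lemma ax_inj {n} {i k : 'I_n} {b e} : ax i b = ax k e -> i = k /\ b = e.
Proof.
move=> /(coordE) H; case: (eqVneq i k) => [eik|nik].
- subst k; split => //; move: (H i); rewrite !mxE eqxx.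
  by case: (b); case: (e); lra.
- move: (H i); rewrite !mxE eqxx (negbTE nik); case: (b) => ?; exfalso; lra.
Qed.

Lemma neg_ax {n} (k : 'I_n) t : - ax k t = ax k (~~ t).
Proof. apply/rowP => j; rewrite !mxE; case: eqP => _ //=; case: (t) => /=. all: by rewrite ?opprK. Qed.

Lemma diffE {n} {c c' o o' : 'rV[rat]_n} : c + o = c' + o' -> c - c' = o' - o.
Proof. move=> /(coordE) H; apply/rowP => j; move: (H j); rewrite !mxE; lra. Qed.

Lemma subE {n} {c c' w : 'rV[rat]_n} : c - c' = w -> c = c' + w.
Proof. move=> /(coordE) H; apply/rowP => j; move: (H j); rewrite !mxE; lra. Qed.

Lemma qq_diff {n} (c : 'rV[rat]_n) s t : (c + qv s) - (c + qv t) = qv s - qv t.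
Proof. apply/rowP => j; rewrite !mxE; lra. Qed.

Lemma aa_diff {n} (c : 'rV[rat]_n) i b k e : (c + ax i b) - (c + ax k e) = ax i b - ax k e.
Proof. apply/rowP => j; rewrite !mxE; lra. Qed.

Module CountLB.
Local Open Scope fset_scope.
Lemma count_lb (T : choiceType) (C N : {fset T}) (L : finType) (good : T -> L -> bool)
  (phi : T -> L -> T) (k : nat) :
 (forall c l, c \in C -> good c l -> phi c l \in N) ->
 (forall c c' l l', c \in C -> c' \in C -> good c l -> good c' l' ->
     phi c l = phi c' l' -> c = c' /\ l = l') ->
 (forall c, c \in C -> k <= #|[pred l | good c l]|)%N ->
 (#|` C| * k <= #|` N|)%N.
Proof.
move=> hN hinj hk.
pose D := [pred x : C * L | good (val x.1) x.2].
pose s := [seq phi (val x.1) x.2 | x <- enum D].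
have us : uniq s.
  rewrite map_inj_in_uniq ?enum_uniq //.
  move=> [c l] [c' l']; rewrite !mem_enum /D /= => g1 g2 /(hinj _ _ _ _ (fsvalP c) (fsvalP c') g1 g2) [e1 e2].
  by move: e1 e2 => /= /val_inj -> ->.
have sub : {subset s <= N}.
  by move=> y /mapP [[c l]]; rewrite mem_enum /D /= => g ->; apply: hN => //; apply: fsvalP.
have := uniq_leq_size us sub.
rewrite size_map -cardE.
have -> : #|D| = (\sum_(c : C) #|[pred l | good (val c) l]|)%N.
  rewrite -sum1_card big_mkcond /= -(pair_big xpredT xpredT (fun c l => if good (val c) l then 1%N else 0%N)) /=.
  apply: eq_bigr => c _; rewrite -sum1_card [RHS]big_mkcond /=; apply: eq_bigr => l _; by rewrite inE.
move=> H; apply: leq_trans H.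
rewrite cardfE -sum_nat_const; apply: leq_sum => c _; apply: hk; apply: fsvalP.
Qed.

End CountLB.
Import CountLB.

Definition flip {n} (k : 'I_n) (s : {ffun 'I_n -> bool}) : {ffun 'I_n -> bool} :=
  [ffun j => if j == k then ~~ s j else s j].

Lemma flipK {n} (k : 'I_n) : involutive (@flip n k).
Proof. by move=> s; apply/ffunP => j; rewrite !ffunE; case: eqP => // _; rewrite negbK. Qed.

Lemma flip_half n (k : 'I_n) (P : pred {ffun 'I_n -> bool}) (a : bool) :
  (forall s, P (flip k s) = P s) ->
  (2 * #|[pred s | P s && (s k == a)]| = #|P|)%N.
Proof.
move=> hP.
have e : #|[pred s | P s && (s k == a)]| = #|[pred s | P s && (s k == ~~ a)]|.
  rewrite -(card_image (can_inj (flipK k))).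
  apply: eq_card => s; rewrite !inE.
  apply/imageP/idP.
  - by case=> t; rewrite inE => /andP [pt /eqP ta] ->; rewrite hP pt /flip ffunE eqxx ta eqxx.
  - move=> /andP [ps /eqP sa]; exists (flip k s); last by rewrite flipK.
    by rewrite inE hP ps /flip ffunE eqxx sa negbK eqxx.
rewrite -(cardID [pred s : {ffun 'I_n -> bool} | s k == a] P).
have e1 : #|[predI P & [pred s : {ffun 'I_n -> bool} | s k == a]]| = #|[pred s | P s && (s k == a)]|.
  by apply: eq_card => s; rewrite !inE.
have e2 : #|[predD P & [pred s : {ffun 'I_n -> bool} | s k == a]]| = #|[pred s | P s && (s k == ~~ a)]|.
  by apply: eq_card => s; rewrite !inE; case: (s k); case: (a); rewrite ?andbT ?andbF.
by rewrite e1 e2 -e; lia.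
Qed.

Lemma card_two n (k m : 'I_n) (a b : bool) : k != m ->
  (4 * #|[pred s : {ffun 'I_n -> bool} | (s m == b) && (s k == a)]| = 2 ^ n)%N.
Proof.
move=> km.
have h1 := @flip_half n k (fun s => s m == b) a.
have h2 := @flip_half n m predT b.
rewrite card_ffun card_bool card_ord in h2.
have e : #|(fun s : {ffun 'I_n -> bool} => s m == b)| = #|[pred s : {ffun 'I_n -> bool} | predT s && (s m == b)]|.
  by apply: eq_card.
rewrite -h2 // -e -h1; last by move=> s; rewrite /flip ffunE; case: (m =P k) => // emk; rewrite emk eqxx in km.
by rewrite mulnA.
Qed.

Lemma adjP {n} {C : {fset 'rV[rat]_n}} {x y} : clique C -> x \in C -> y \in C -> x != y ->
  (exists i b, x - y = ax i b) \/ (exists s, x - y = qv s).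
Proof. by move=> [_ hc] hx hy hxy; apply/halfVP_P; apply: hc. Qed.

Definition goodq {n} (C : {fset 'rV[rat]_n}) c (s : {ffun 'I_n -> bool}) :=
  [forall l : 'I_n, forall t : bool, (c + ax l t \in C) ==> ((s l != t) || (s (ordS l) == t))].
Definition gooda {n} (C : {fset 'rV[rat]_n}) c (p : 'I_n * bool) :=
  [forall t : {ffun 'I_n -> bool}, (c + qv t \in C) ==> (t p.1 != p.2)].
Definition lab n := ({ffun 'I_n -> bool} + ('I_n * bool))%type.
Definition good {n} (C : {fset 'rV[rat]_n}) c (l : lab n) : bool :=
  match l with inl s => goodq C c s | inr p => gooda C c p end.
Definition off {n} (l : lab n) : 'rV[rat]_n :=
  match l with inl s => qv s | inr p => ax p.1 p.2 end.

Lemma qa_contra {n} {C : {fset 'rV[rat]_n}} {c c' s i b} : (4 <= n)%N -> clique C ->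
  c \in C -> c' \in C -> c != c' -> gooda C c' (i, b) -> c - c' = ax i b - qv s -> False.
Proof.
move=> hn hC hc hc' ncc g D.
case: (adjP hC hc hc' ncc) => [[k [t A]]|[u A]]; rewrite A in D.
- have h3 : (3 <= n)%N by [lia]. exact: (L3a h3 (esym D)).
- have ui := L3b (esym D).
  move/forallP: g => /(_ u); rewrite -(subE A) hc /= ui; by rewrite eqxx.
Qed.

Lemma inj_lab {n} (C : {fset 'rV[rat]_n}) c c' l l' : (4 <= n)%N -> clique C ->
  c \in C -> c' \in C -> good C c l -> good C c' l' -> c + off l = c' + off l' ->
  c = c' /\ l = l'.
Proof.
move=> hn hC hc hc' g g' H.
have h3 : (3 <= n)%N by lia.
case: (eqVneq c c') => [ecc|ncc].
- subst c'; move/addrI: H => e; split => //.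
  case: l l' e {g g'} => [s|[i b]] [s'|[i' b']] /= e.
  + by rewrite (qv_inj e).
  + by exfalso; apply: (ax_qv h3 (esym e)).
  + by exfalso; apply: (ax_qv h3 e).
  + by case: (ax_inj e) => -> ->.
- exfalso; have D := diffE H.
  case: l l' g g' H D => [s|[i b]] [s'|[i' b']] /= g g' H D.
  + case: (adjP hC hc hc' ncc) => [[k [t A]]|[u A]]; rewrite A in D.
    * have [agree hs' hs] := L2b (esym D).
      have c1 : c' + ax k t \in C by rewrite -(subE A).
      have c2 : c + ax k (~~ t) \in C.
        have A' : c' - c = ax k (~~ t) by rewrite -neg_ax -A opprB.
        by rewrite -(subE A').
      move/forallP: g' => /(_ k) /forallP /(_ t); rewrite c1 hs' eqxx /= => /eqP e1.
      move/forallP: g => /(_ k) /forallP /(_ (~~ t)); rewrite c2 hs eqxx /= => /eqP e2.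
      have := agree (ordS k) (ordS_neq k (_ : (1 < n)%N)).
      rewrite e1 e2 => /(_ ltac:(lia)); by case: (t).
    * by apply: (L2 (_ : (0 < n)%N) (esym D)); lia.
  + exact: (qa_contra hn hC hc hc' ncc g' D).
  + have ncc' : c' != c by rewrite eq_sym.
    exact: (qa_contra hn hC hc' hc ncc' g (diffE (esym H))).
  + case: (adjP hC hc hc' ncc) => [[k [t A]]|[u A]]; rewrite A in D.
    * exact: (L1b h3 (esym D)).
    * exact: (L1a h3 (esym D)).
Qed.

Lemma uniq_axn {n} {C : {fset 'rV[rat]_n}} {c k t l u} : (4 <= n)%N -> clique C ->
  c + ax k t \in C -> c + ax l u \in C -> l = k /\ u = t.
Proof.
move=> hn hC h1 h2; have h3 : (3 <= n)%N by lia.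
case: (eqVneq (c + ax l u) (c + ax k t)) => [e|ne].
- by move/addrI: e => /ax_inj [-> ->].
- exfalso; case: (adjP hC h2 h1 ne) => [[i [b A]]|[s A]]; rewrite aa_diff in A.
  + exact: (L1b h3 A).
  + exact: (L1a h3 A).
Qed.

Lemma cnt_q {n} {C : {fset 'rV[rat]_n}} {c} : (4 <= n)%N -> clique C ->
  (3 * 2 ^ (n - 2) <= #|[pred s | goodq C c s]|)%N.
Proof.
move=> hn hC.
have e2 : (2 ^ n = 4 * 2 ^ (n - 2))%N.
  have h2 : (2 <= n)%N by lia.
  by rewrite -[in LHS](subnK h2) expnD mulnC.
case: (pickP [pred p : 'I_n * bool | c + ax p.1 p.2 \in C]) => [[k t] /= hkt|none].
- have eq : [pred s | goodq C c s] =i [predC [pred s : {ffun 'I_n -> bool} | (s (ordS k) == ~~ t) && (s k == t)]].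
    move=> s; rewrite !inE /goodq.
    apply/forallP/idP.
    + move=> /(_ k) /forallP /(_ t); rewrite hkt /=.
      by case: (s k); case: (s (ordS k)); case: (t).
    + move=> H l; apply/forallP => u; apply/implyP => hlu.
      have [-> ->] := uniq_axn hn hC hkt hlu.
      by move: H; case: (s k); case: (s (ordS k)); case: (t).
  rewrite (eq_card eq).
  set P := [pred s : {ffun 'I_n -> bool} | (s (ordS k) == ~~ t) && (s k == t)].
  have kS : k != ordS k by rewrite eq_sym ordS_neq //; lia.
  have h4 : (4 * #|P| = 2 ^ n)%N := card_two n k (ordS k) t (~~ t) kS.
  have h5 : (#|P| + #|[predC P]| = 2 ^ n)%N.
    by rewrite cardC card_ffun card_bool card_ord.
  set X := #|P| in h4 h5; set Y := #|[predC P]| in h5 *; clearbody X Y; move: e2 h4 h5; generalize (2 ^ n)%N (2 ^ (n - 2))%N => a b; lia.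
- have eq : [pred s | goodq C c s] =i predT.
    move=> s; rewrite !inE /goodq; apply/forallP => l; apply/forallP => u.
    by have := none (l, u); rewrite /= => ->.
  by rewrite (eq_card eq) card_ffun card_bool card_ord; lia.
Qed.

Lemma QQ {n} {C : {fset 'rV[rat]_n}} {c} {t t' : {ffun 'I_n -> bool}} {x} :
  (4 <= n)%N -> clique C ->
  c + qv t \in C -> c + qv t' \in C -> t x != t' x -> forall j, j != x -> t j = t' j.
Proof.
move=> hn hC h1 h2 hx j jx.
have ne : c + qv t != c + qv t'.
  by apply/eqP => /addrI /qv_inj e; rewrite e eqxx in hx.
case: (adjP hC h1 h2 ne) => [[k [b A]]|[u A]]; rewrite qq_diff in A.
- have [agree hs ht] := L2b A.
  have xk : x = k.
    by apply/eqP; apply: contraNT hx => xk; rewrite (agree x xk).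
  by apply: agree; rewrite -xk.
- by exfalso; apply: (L2 (_ : (0 < n)%N) A); lia.
Qed.

Definition bad {n} (C : {fset 'rV[rat]_n}) c (i : 'I_n) :=
  ~~ gooda C c (i, true) && ~~ gooda C c (i, false).

Lemma bad_uniq {n} {C : {fset 'rV[rat]_n}} {c} {i j} : (4 <= n)%N -> clique C ->
  bad C c i -> bad C c j -> i = j.
Proof.
move=> hn hC /andP [/forallPn [t1 /= H1] /forallPn [t2 /= H2]]
  /andP [/forallPn [e1 /= G1] /forallPn [e2 /= G2]].
rewrite negb_imply negbK in H1; rewrite negb_imply negbK in H2.
rewrite negb_imply negbK in G1; rewrite negb_imply negbK in G2.
case/andP: H1 => h1 /eqP t1i; case/andP: H2 => h2 /eqP t2i.
case/andP: G1 => g1 /eqP e1j; case/andP: G2 => g2 /eqP e2j.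
have d12 : t1 i != t2 i by rewrite t1i t2i.
have agree := QQ hn hC h1 h2 d12.
have all : forall e, c + qv e \in C -> forall j', j' != i -> e j' = t1 j'.
  move=> e he j' ji; case: (eqVneq (e i) (t1 i)) => [ei|ei].
  - have ei2 : e i != t2 i by rewrite ei.
    by rewrite (QQ hn hC he h2 ei2 j' ji) (agree j' ji).
  - exact: (QQ hn hC he h1 ei j' ji).
apply/eqP; apply: contraT => ij.
have ji : j != i by rewrite eq_sym.
have := all e1 g1 j ji; have := all e2 g2 j ji.
by rewrite e1j e2j => <-.
Qed.

Lemma cnt_a {n} {C : {fset 'rV[rat]_n}} {c} : (4 <= n)%N -> clique C ->
  (n - 1 <= #|[pred p | gooda C c p]|)%N.
Proof.
move=> hn hC.
have le1 : (#|[pred i | bad C c i]| <= 1)%N.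
  by apply/card_le1_eqP => i j; rewrite !inE => bi bj; exact: (bad_uniq hn hC bj bi).
have c2 := cardC [pred i | bad C c i]; rewrite card_ord in c2.
pose f := fun i : 'I_n => (i, gooda C c (i, true)).
have finj : injective f by move=> i j /(congr1 fst).
have : (#|[predC [pred i | bad C c i]]| <= #|[pred p | gooda C c p]|)%N.
  rewrite -(card_image finj); apply: subset_leq_card; apply/subsetP => p /imageP [i hi ->].
  move: hi; rewrite !inE /bad negb_and !negbK /f.
  by case: (boolP (gooda C c (i, true))) => //= _ /orP [] // ->.
set P := [pred i | bad C c i] in le1 c2 *.
set X := #|P| in le1 c2; set Y := #|[predC P]| in c2 *.
set Z := #|[pred p | gooda C c p]|; clearbody X Y Z; lia.
Qed.

Lemma card_good {n} (C : {fset 'rV[rat]_n}) c :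
  #|[pred l | good C c l]| = (#|[pred s | goodq C c s]| + #|[pred p | gooda C c p]|)%N.
Proof.
rewrite -!sum1_card big_sumType /=.
by congr addn; apply: eq_bigl => x; rewrite !inE.
Qed.

Lemma in_N {n} (C : {fset 'rV[rat]_n}) c v : c \in C -> v \in halfVP n ->
  c + v \in closed_nbhd C.
Proof. by move=> hc hv; rewrite /closed_nbhd; apply: in_imfset2 => //=; rewrite in_cons hv orbT. Qed.

Theorem lemma16 (n : nat) (C : {fset 'rV[rat]_n}) :
  (4 <= n)%N -> clique C ->
  delta0 C <= 1 / ((3 / 4) * 2 ^+ n + n%:R - 1).
Proof.
move=> hn hC.
have key : (#|` C| * (3 * 2 ^ (n - 2) + (n - 1)) <= #|` closed_nbhd C|)%N.
  apply: (count_lb _ C _ _ (@good n C) (fun c l => c + off l) _).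
  - move=> c [s|[i b]] hc _ /=; apply: in_N => //; apply/halfVP_P.
    + by right; exists s.
    + by left; exists i, b.
  - move=> c c' l l' hc hc' g g' /= H; exact: (inj_lab _ _ _ _ _ hn hC hc hc' g g' H).
  - move=> c hc; rewrite card_good; apply: leq_add; [exact: cnt_q | exact: cnt_a].
rewrite /delta0.
have K : (3 / 4) * 2 ^+ n + n%:R - 1 = (3 * 2 ^ (n - 2) + (n - 1))%N%:R :> rat.
  have h2 : (2 <= n)%N by lia.
  rewrite natrD natrM natrX natrB; last lia.
  have e : (2:rat) ^+ n = 2 ^+ (n - 2) * (2 * 2) by rewrite -{1}(subnK h2) exprD expr2.
  rewrite e; lra.
rewrite K.
move: key; set k := (3 * 2 ^ (n - 2) + (n - 1))%N => key.
set a := #|` C| in key *; set b := #|` closed_nbhd C| in key *.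
have kpos : (0 < k)%N by rewrite /k; lia.
case: (posnP a) => [a0|apos].
  by rewrite a0 mul0r divr_ge0 // ler0n.
have bpos : (0 < b)%N by apply: leq_trans key; rewrite muln_gt0 apos kpos.
rewrite ler_pdivrMr ?ltr0n // mul1r mulrC ler_pdivlMr ?ltr0n //.
by rewrite -natrM ler_nat.
Qed.
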